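(* Let $v$ satisfy the standing assumptions and the doubling condition, and let $g(x)=v(1-x^{-1})$. Suppose that for every $q>1$ there exist $A(q)>1$ and $y_0$ such that for all $y>y_0$ and $x>qy$ one has $g(x)>A(q)\,g(y)$. Let $u(z)=\operatorname{Re}\sum_k a_{n_k}z^{n_k}$ be a Hadamard gap series ($n_k$ positive integers, $n_{k+1}\ge\lambda n_k$, $\lambda>1$). If there is $C$ with $|a_{n_k}|\le C g(n_k)$ for all $k$, then $u\in h^\infty_v$.
   Context: Standing assumptions: $v:[0,1)\to[1,\infty)$ is positive, increasing, continuous, $v(0)=1$, $\lim_{r\to1}v(r)=+\infty$. Doubling condition: there is $D\ge1$ with $v(1-d)\le D\,v(1-2d)$ for all $d\in(0,1/2]$. $h^\infty_v$ is the set of real harmonic $u$ on $\mathbb{D}$ with $|u(z)|\le Kv(|z|)$ for some $K>0$. *)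

(* Defs.v *)
(* classical reals. Complex numbers are encoded as pairs of reals. *)
From Stdlib Require Import Reals Lra.
Open Scope R_scope.

(* Standing assumptions on the weight v : [0,1) -> [1,oo) (v given on R, only
   its values on [0,1) matter). *)
Definition standing_weight (v : R -> R) : Prop :=
  v 0 = 1 /\
  (forall r, 0 <= r < 1 -> 1 <= v r) /\
  (forall r s, 0 <= r -> r < s -> s < 1 -> v r < v s) /\
  (forall r, 0 <= r < 1 -> forall eps, eps > 0 -> exists delta, delta > 0 /\
      forall s, 0 <= s < 1 -> Rabs (s - r) < delta -> Rabs (v s - v r) < eps) /\
  (forall M, exists r0, 0 <= r0 < 1 /\ forall r, r0 < r < 1 -> v r > M).

Definition doubling (v : R -> R) : Prop :=
  exists D, 1 <= D /\ forall d, 0 < d <= 1/2 -> v (1 - d) <= D * v (1 - 2 * d).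

Definition gfun (v : R -> R) (x : R) : R := v (1 - / x).

(* z^n for z = x + i y, as (Re, Im). *)
Fixpoint cpow (x y : R) (n : nat) : R * R :=
  match n with
  | O => (1, 0)
  | S m => let (p, q) := cpow x y m in (x * p - y * q, x * q + y * p)
  end.

(* Re (a z^n) with a = ar + i ai *)
Definition re_term (ar ai : R) (n : nat) (x y : R) : R :=
  ar * fst (cpow x y n) - ai * snd (cpow x y n).

Definition in_disc (x y : R) : Prop := x * x + y * y < 1.

Definition cont2_at (f : R -> R -> R) (x y : R) : Prop :=
  forall eps, eps > 0 -> exists delta, delta > 0 /\
    forall x' y', Rabs (x' - x) < delta -> Rabs (y' - y) < delta ->
      Rabs (f x' y' - f x y) < eps.

Definition harmonic_disc (u : R -> R -> R) : Prop :=
  exists ux uy uxx uxy uyx uyy : R -> R -> R,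
  forall x y, in_disc x y ->
    derivable_pt_lim (fun t => u t y) x (ux x y) /\
    derivable_pt_lim (fun t => u x t) y (uy x y) /\
    derivable_pt_lim (fun t => ux t y) x (uxx x y) /\
    derivable_pt_lim (fun t => ux x t) y (uxy x y) /\
    derivable_pt_lim (fun t => uy t y) x (uyx x y) /\
    derivable_pt_lim (fun t => uy x t) y (uyy x y) /\
    cont2_at u x y /\ cont2_at ux x y /\ cont2_at uy x y /\
    cont2_at uxx x y /\ cont2_at uxy x y /\ cont2_at uyx x y /\
    cont2_at uyy x y /\
    uxx x y + uyy x y = 0.

Definition in_h_inf_v (v : R -> R) (u : R -> R -> R) : Prop :=
  harmonic_disc u /\
  exists K, K > 0 /\ forall x y, in_disc x y ->
    Rabs (u x y) <= K * v (sqrt (x * x + y * y)).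

(* Main.v *)
Require Import Defs.
From Stdlib Require Import Reals Lra Lia Psatz ClassicalEpsilon.
Open Scope R_scope.


Lemma sum_f_plus f g N : sum_f_R0 (fun k => f k + g k) N = sum_f_R0 f N + sum_f_R0 g N.
Proof. induction N; simpl; [lra| rewrite IHN; lra]. Qed.
Lemma sum_f_scal c f N : sum_f_R0 (fun k => c * f k) N = c * sum_f_R0 f N.
Proof. induction N; simpl; [lra| rewrite IHN; lra]. Qed.

Lemma isum_plus f g a b : infinite_sum f a -> infinite_sum g b ->
  infinite_sum (fun k => f k + g k) (a+b).
Proof.
  intros Hf Hg. assert (H := CV_plus _ _ _ _ Hf Hg).
  intros eps He; destruct (H eps He) as [N HN]; exists N; intros.
  rewrite sum_f_plus; apply HN; auto.
Qed.

Lemma isum_scal c f a : infinite_sum f a -> infinite_sum (fun k => c * f k) (c*a).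
Proof.
  intros Hf eps He.
  destruct (Hf (eps / (Rabs c + 1))) as [N HN].
  { apply Rdiv_lt_0_compat; [lra| pose proof (Rabs_pos c); lra]. }
  exists N; intros m Hm. rewrite sum_f_scal. unfold Rdist.
  specialize (HN m Hm). unfold Rdist in HN.
  replace (c * sum_f_R0 f m - c * a) with (c * (sum_f_R0 f m - a)) by ring.
  rewrite Rabs_mult. pose proof (Rabs_pos c).
  pose proof (Rabs_pos (sum_f_R0 f m - a)).
  apply Rle_lt_trans with ((Rabs c + 1) * Rabs (sum_f_R0 f m - a)). nra.
  apply Rlt_le_trans with ((Rabs c + 1) * (eps / (Rabs c + 1))).
  apply Rmult_lt_compat_l; lra. right; field; lra.
Qed.

Lemma isum_minus f g a b : infinite_sum f a -> infinite_sum g b ->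
  infinite_sum (fun k => f k - g k) (a-b).
Proof.
  intros Hf Hg. assert (H := isum_plus _ _ _ _ Hf (isum_scal (-1) _ _ Hg)).
  intros eps He; destruct (H eps He) as [N HN]; exists N; intros m Hm.
  specialize (HN m Hm).
  replace (sum_f_R0 (fun k => f k - g k) m) with (sum_f_R0 (fun k => f k + -1 * g k) m).
  replace (a - b) with (a + -1 * b) by ring. exact HN.
  apply sum_eq; intros; ring.
Qed.

Lemma isum_le f g a b : infinite_sum f a -> infinite_sum g b -> (forall k, f k <= g k) -> a <= b.
Proof.
  intros Hf Hg H. eapply Rle_cv_lim; [|exact Hf|exact Hg].
  intros; apply sum_Rle; auto.
Qed.

Lemma Rabs_le_between a b : Rabs a <= b -> -b <= a <= b.
Proof. unfold Rabs; destruct (Rcase_abs a); lra. Qed.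

Lemma CV_const c : Un_cv (fun _ => c) c.
Proof. intros eps He; exists O; intros; unfold Rdist; rewrite Rminus_diag, Rabs_R0; lra. Qed.

Lemma isum_abs_le f c a L : infinite_sum f a -> infinite_sum c L ->
  (forall k, Rabs (f k) <= c k) -> Rabs a <= L.
Proof.
  intros Hf Hc H. apply Rabs_le; split.
  - replace (-L) with (-1 * L) by ring.
    apply (isum_le _ _ _ _ (isum_scal (-1) _ _ Hc) Hf). intros k; specialize (H k).
    apply Rabs_le_between in H. lra.
  - apply (isum_le _ _ _ _ Hf Hc). intros k; specialize (H k).
    apply Rabs_le_between in H. lra.
Qed.

Lemma isum_unique f a b : infinite_sum f a -> infinite_sum f b -> a = b.
Proof. intros. eapply UL_sequence; eauto. Qed.

Lemma isum_comp_nonneg f c : (forall k, 0 <= f k <= c k) -> (exists L, infinite_sum c L) ->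
  exists l, infinite_sum f l.
Proof.
  intros H [L HL]. destruct (Rseries_CV_comp f c H) as [l Hl].
  exists L; exact HL. exists l; exact Hl.
Qed.

Lemma isum_conv_abs f c : (forall k, Rabs (f k) <= c k) -> (exists L, infinite_sum c L) ->
  exists l, infinite_sum f l.
Proof.
  intros H [L HL].
  destruct (isum_comp_nonneg (fun k => f k + c k) (fun k => 2 * c k)) as [l Hl].
  { intros k; specialize (H k); apply Rabs_le_between in H; lra. }
  { exists (2 * L); apply isum_scal; auto. }
  exists (l - L). pose proof (isum_minus _ _ _ _ Hl HL).
  intros eps He; destruct (H0 eps He) as [N HN]; exists N; intros m Hm.
  specialize (HN m Hm). erewrite sum_eq; [exact HN|]. intros; simpl; ring.
Qed.

Lemma isum_bounded f B : (forall k, 0 <= f k) -> (forall N, sum_f_R0 f N <= B) ->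
  exists l, infinite_sum f l /\ l <= B.
Proof.
  intros H0 HB. destruct (growing_cv (fun N => sum_f_R0 f N)) as [l Hl].
  { intros N; simpl; specialize (H0 (S N)); lra. }
  { exists B; intros x [i ->]; apply HB. }
  exists l; split; [exact Hl|].
  eapply Rle_cv_lim; [| exact Hl | apply CV_const]. intros; apply HB.
Qed.

Definition ser (f : nat -> R) : R :=
  match excluded_middle_informative (exists l, infinite_sum f l) with
  | left H => proj1_sig (constructive_indefinite_description _ H)
  | right _ => 0 end.

Lemma ser_spec f : (exists l, infinite_sum f l) -> infinite_sum f (ser f).
Proof.
  intros H. unfold ser. destruct (excluded_middle_informative _) as [H'|H'].
  - exact (proj2_sig (constructive_indefinite_description _ H')).
  - contradiction.
Qed.

Lemma ser_eq f l : infinite_sum f l -> ser f = l.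
Proof. intros H. apply (isum_unique f); auto. apply ser_spec; eauto. Qed.


Lemma cpow_S x y m : cpow x y (S m) =
  (x * fst (cpow x y m) - y * snd (cpow x y m), x * snd (cpow x y m) + y * fst (cpow x y m)).
Proof. simpl. destruct (cpow x y m); reflexivity. Qed.

Lemma cpow_norm x y m : fst (cpow x y m) ^ 2 + snd (cpow x y m) ^ 2 = (x*x+y*y) ^ m.
Proof.
  induction m; [simpl; ring|]. rewrite cpow_S; simpl fst; simpl snd.
  replace ((x*x+y*y)^(S m)) with ((x*x+y*y)*(x*x+y*y)^m) by (simpl; ring).
  rewrite <- IHm. ring.
Qed.

Lemma sq_abs_le a s : 0 <= s -> a ^ 2 <= s ^ 2 -> Rabs a <= s.
Proof. intros Hs H. apply Rabs_le. split; nra. Qed.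

Lemma cpow_bound x y s m : 0 <= s -> x*x+y*y <= s*s ->
  Rabs (fst (cpow x y m)) <= s ^ m /\ Rabs (snd (cpow x y m)) <= s ^ m.
Proof.
  intros Hs H. assert (Hn := cpow_norm x y m).
  assert (Hp : (x*x+y*y)^m <= (s^m)^2).
  { rewrite <- pow_mult, Nat.mul_comm, pow_mult. apply pow_incr. split; [nra|]. simpl; lra. }
  assert (0 <= s^m) by (apply pow_le; auto).
  split; apply sq_abs_le; auto; nra.
Qed.

Lemma re_term_bound a b m x y s : 0 <= s -> x*x+y*y <= s*s ->
  Rabs (re_term a b m x y) <= (Rabs a + Rabs b) * s ^ m.
Proof.
  intros Hs H. destruct (cpow_bound x y s m Hs H) as [H1 H2]. unfold re_term.
  eapply Rle_trans; [apply Rabs_triang|]. rewrite Rabs_Ropp, !Rabs_mult.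
  pose proof (Rabs_pos a); pose proof (Rabs_pos b). nra.
Qed.

Lemma dpl_ext f g x l : (forall t, f t = g t) -> derivable_pt_lim g x l -> derivable_pt_lim f x l.
Proof. intros H Hg eps He. destruct (Hg eps He) as [d Hd]; exists d; intros; rewrite !H; auto. Qed.
Lemma dpl_eq f x l l' : derivable_pt_lim f x l -> l = l' -> derivable_pt_lim f x l'.
Proof. intros; subst; auto. Qed.
Lemma dpl_mul f g x a b : derivable_pt_lim f x a -> derivable_pt_lim g x b ->
  derivable_pt_lim (fun t => f t * g t) x (a * g x + f x * b).
Proof. intros; apply (derivable_pt_lim_mult f g); auto. Qed.
Lemma dpl_sub f g x a b : derivable_pt_lim f x a -> derivable_pt_lim g x b ->
  derivable_pt_lim (fun t => f t - g t) x (a - b).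
Proof. intros; apply (derivable_pt_lim_minus f g); auto. Qed.
Lemma dpl_add f g x a b : derivable_pt_lim f x a -> derivable_pt_lim g x b ->
  derivable_pt_lim (fun t => f t + g t) x (a + b).
Proof. intros; apply (derivable_pt_lim_plus f g); auto. Qed.
Lemma dpl_id x : derivable_pt_lim (fun t => t) x 1.
Proof. apply derivable_pt_lim_id. Qed.
Lemma dpl_const c x : derivable_pt_lim (fun _ => c) x 0.
Proof. apply derivable_pt_lim_const. Qed.

Lemma cpow_dx y m x :
  derivable_pt_lim (fun t => fst (cpow t y m)) x (INR m * fst (cpow x y (pred m))) /\
  derivable_pt_lim (fun t => snd (cpow t y m)) x (INR m * snd (cpow x y (pred m))).
Proof.
  induction m as [|m [IH1 IH2]].
  - simpl. split; eapply dpl_eq; try apply dpl_const; ring.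
  - split.
    + eapply dpl_ext. { intros t; rewrite cpow_S; reflexivity. } simpl fst.
      eapply dpl_eq. apply dpl_sub; apply dpl_mul; eauto using dpl_id, dpl_const.
      simpl pred. destruct m. simpl; ring. rewrite (cpow_S x y m). simpl pred. simpl fst.
      rewrite !S_INR. simpl fst; simpl snd. ring.
    + eapply dpl_ext. { intros t; rewrite cpow_S; reflexivity. } simpl snd.
      eapply dpl_eq. apply dpl_add; apply dpl_mul; eauto using dpl_id, dpl_const.
      simpl pred. destruct m. simpl; ring. rewrite (cpow_S x y m). simpl pred. simpl snd.
      rewrite !S_INR. simpl fst; simpl snd. ring.
Qed.

Lemma cpow_dy x m y :
  derivable_pt_lim (fun t => fst (cpow x t m)) y (- (INR m * snd (cpow x y (pred m)))) /\
  derivable_pt_lim (fun t => snd (cpow x t m)) y (INR m * fst (cpow x y (pred m))).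
Proof.
  induction m as [|m [IH1 IH2]].
  - simpl. split; eapply dpl_eq; try apply dpl_const; ring.
  - split.
    + eapply dpl_ext. { intros t; rewrite cpow_S; reflexivity. } simpl fst.
      eapply dpl_eq. apply dpl_sub; apply dpl_mul; eauto using dpl_id, dpl_const.
      simpl pred. destruct m. simpl; ring. rewrite (cpow_S x y m). simpl pred. simpl snd.
      rewrite !S_INR. simpl fst; simpl snd. ring.
    + eapply dpl_ext. { intros t; rewrite cpow_S; reflexivity. } simpl snd.
      eapply dpl_eq. apply dpl_add; apply dpl_mul; eauto using dpl_id, dpl_const.
      simpl pred. destruct m. simpl; ring. rewrite (cpow_S x y m). simpl pred. simpl fst.
      rewrite !S_INR. simpl fst; simpl snd. ring.
Qed.

Lemma re_term_dx a b m x y :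
  derivable_pt_lim (fun t => re_term a b m t y) x (re_term (INR m * a) (INR m * b) (pred m) x y).
Proof.
  destruct (cpow_dx y m x) as [H1 H2]. unfold re_term.
  eapply dpl_eq. apply dpl_sub; apply dpl_mul; eauto using dpl_const. unfold re_term; ring.
Qed.

Lemma re_term_dy a b m x y :
  derivable_pt_lim (fun t => re_term a b m x t) y (re_term (- (INR m * b)) (INR m * a) (pred m) x y).
Proof.
  destruct (cpow_dy x m y) as [H1 H2]. unfold re_term.
  eapply dpl_eq. apply dpl_sub; apply dpl_mul; eauto using dpl_const. unfold re_term; ring.
Qed.


Lemma lip g g' a b M : (forall t, Rmin a b <= t <= Rmax a b ->
   derivable_pt_lim g t (g' t) /\ Rabs (g' t) <= M) -> Rabs (g b - g a) <= M * Rabs (b - a).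
Proof.
  intros H. destruct (Rtotal_order a b) as [Hab|[Hab|Hab]].
  - destruct (MVT_cor2 g g' a b Hab) as [c [Hc1 Hc2]].
    { intros c Hc; apply H. unfold Rmin, Rmax; destruct (Rle_dec a b); lra. }
    rewrite Hc1, Rabs_mult. apply Rmult_le_compat_r; [apply Rabs_pos|].
    apply H. unfold Rmin, Rmax; destruct (Rle_dec a b); lra.
  - subst. rewrite !Rminus_diag, Rabs_R0. specialize (H b).
    assert (0 <= M). { destruct H as [_ H]. unfold Rmin, Rmax; destruct (Rle_dec b b); lra.
      pose proof (Rabs_pos (g' b)); lra. } lra.
  - destruct (MVT_cor2 g g' b a Hab) as [c [Hc1 Hc2]].
    { intros c Hc; apply H. unfold Rmin, Rmax; destruct (Rle_dec a b); lra. }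
    replace (g b - g a) with (- (g a - g b)) by ring.
    replace (b - a) with (- (a - b)) by ring.
    rewrite !Rabs_Ropp, Hc1, Rabs_mult. apply Rmult_le_compat_r; [apply Rabs_pos|].
    apply H. unfold Rmin, Rmax; destruct (Rle_dec a b); lra.
Qed.

Lemma between_abs a b t : Rmin a b <= t <= Rmax a b -> Rabs (t - a) <= Rabs (b - a).
Proof. unfold Rmin, Rmax; destruct (Rle_dec a b); intros; unfold Rabs;
  repeat destruct Rcase_abs; lra. Qed.

Lemma series_deriv (F F' F'' : nat -> R -> R) (S : R -> R) (l' : R) (c : nat -> R) x d :
  d > 0 ->
  (forall k t, Rabs (t - x) < d -> derivable_pt_lim (F k) t (F' k t) /\
     derivable_pt_lim (F' k) t (F'' k t) /\ Rabs (F'' k t) <= c k) ->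
  (forall t, Rabs (t - x) < d -> infinite_sum (fun k => F k t) (S t)) ->
  infinite_sum (fun k => F' k x) l' ->
  (exists L, infinite_sum c L) ->
  derivable_pt_lim S x l'.
Proof.
  intros Hd HF HS Hl' [L HL].
  assert (key : forall h, Rabs h < d ->
     Rabs (S (x + h) - S x - h * l') <= h * h * L).
  { intros h Hh.
    assert (Hsum : infinite_sum (fun k => F k (x+h) - F k x - h * F' k x)
                    (S (x + h) - S x - h * l')).
    { apply isum_minus. apply isum_minus; apply HS.
      replace (x + h - x) with h by ring; auto. rewrite Rminus_diag, Rabs_R0; lra.
      apply isum_scal; auto. }
    apply (isum_abs_le _ _ _ _ Hsum (isum_scal (h*h) _ _ HL)).
    intros k.
    set (G := fun t => F k t - F k x - (t - x) * F' k x).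
    assert (E : F k (x + h) - F k x - h * F' k x = G (x + h) - G x).
    { unfold G. replace (x + h - x) with h by ring. ring. }
    rewrite E.
    replace (h * h * c k) with ((c k * Rabs h) * Rabs (x + h - x)).
    2:{ replace (x + h - x) with h by ring. rewrite Rmult_assoc, <- (Rabs_mult h h), Rabs_right by nra.
        ring. }
    apply (lip G (fun t => F' k t - F' k x)).
    intros t Ht. pose proof (between_abs _ _ _ Ht) as Ht'.
    replace (x + h - x) with h in Ht' by ring.
    split.
    - unfold G. eapply dpl_eq. apply dpl_sub. apply dpl_sub. apply HF; lra. apply dpl_const.
      apply dpl_mul. apply dpl_sub. apply dpl_id. apply dpl_const. apply dpl_const. cbv beta; ring.
    - eapply Rle_trans.
      apply (lip (F' k) (F'' k) x t (c k)).
      { intros s Hs. pose proof (between_abs _ _ _ Hs). split; apply HF; lra. }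
      apply Rmult_le_compat_l; auto.
      pose proof (HF k x) as Hx. rewrite Rminus_diag, Rabs_R0 in Hx.
      destruct (Hx Hd) as [_ [_ Hc]]. pose proof (Rabs_pos (F'' k x)); lra. }
  intros eps He.
  assert (HLp : 0 < eps / (Rabs L + 1)) by (apply Rdiv_lt_0_compat; [lra| pose proof (Rabs_pos L); lra]).
  exists (mkposreal _ (Rmin_pos _ _ Hd HLp)). simpl. intros h Hh0 Hh.
  assert (Hh1 : Rabs h < d) by (eapply Rlt_le_trans; [exact Hh| apply Rmin_l]).
  assert (Hh2 : Rabs h < eps / (Rabs L + 1)) by (eapply Rlt_le_trans; [exact Hh| apply Rmin_r]).
  specialize (key h Hh1).
  replace ((S (x + h) - S x) / h - l') with ((S (x + h) - S x - h * l') / h) by (field; auto).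
  unfold Rdiv. rewrite Rabs_mult, Rabs_inv.
  assert (0 < Rabs h) by (apply Rabs_pos_lt; auto).
  apply Rle_lt_trans with (Rabs h * (Rabs L + 1)).
  - apply Rmult_le_reg_r with (Rabs h); auto. rewrite Rmult_assoc, Rinv_l by lra.
    replace (h * h) with (Rabs h * Rabs h) in key.
    2:{ rewrite <- Rabs_mult, Rabs_right by nra; ring. }
    pose proof (Rle_abs L). nra.
  - apply Rmult_lt_reg_r with (/ (Rabs L + 1)). apply Rinv_0_lt_compat; pose proof (Rabs_pos L); lra.
    rewrite Rmult_assoc, Rinv_r by (pose proof (Rabs_pos L); lra). lra.
Qed.

Lemma cont2_from (U Ux Uy : R -> R -> R) x y d M : d > 0 ->
  (forall x' y', Rabs (x' - x) < d -> Rabs (y' - y) < d ->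
     derivable_pt_lim (fun t => U t y') x' (Ux x' y') /\
     derivable_pt_lim (fun t => U x' t) y' (Uy x' y') /\
     Rabs (Ux x' y') <= M /\ Rabs (Uy x' y') <= M) ->
  cont2_at U x y.
Proof.
  intros Hd H eps He.
  assert (HM : 0 <= M). { destruct (H x y) as [_ [_ [Hm _]]]; try (rewrite Rminus_diag, Rabs_R0; lra).
     pose proof (Rabs_pos (Ux x y)); lra. }
  assert (Hp : 0 < eps / (2*M+2)) by (apply Rdiv_lt_0_compat; lra).
  exists (Rmin d (eps/(2*M+2))). split. apply Rmin_pos; auto.
  intros x' y' Hx Hy.
  assert (Hx1 : Rabs (x'-x) < d) by (eapply Rlt_le_trans; [exact Hx| apply Rmin_l]).
  assert (Hy1 : Rabs (y'-y) < d) by (eapply Rlt_le_trans; [exact Hy| apply Rmin_l]).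
  assert (Hx2 : Rabs (x'-x) < eps/(2*M+2)) by (eapply Rlt_le_trans; [exact Hx| apply Rmin_r]).
  assert (Hy2 : Rabs (y'-y) < eps/(2*M+2)) by (eapply Rlt_le_trans; [exact Hy| apply Rmin_r]).
  assert (A1 : Rabs (U x' y' - U x' y) <= M * Rabs (y' - y)).
  { apply (lip (fun t => U x' t) (fun t => Uy x' t)). intros t Ht.
    pose proof (between_abs _ _ _ Ht). destruct (H x' t) as [_ [? [_ ?]]]; auto; lra. }
  assert (A2 : Rabs (U x' y - U x y) <= M * Rabs (x' - x)).
  { apply (lip (fun t => U t y) (fun t => Ux t y)). intros t Ht.
    pose proof (between_abs _ _ _ Ht). destruct (H t y) as [? [_ [? _]]]; auto; try lra.
    rewrite Rminus_diag, Rabs_R0; lra. }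
  replace (U x' y' - U x y) with ((U x' y' - U x' y) + (U x' y - U x y)) by ring.
  eapply Rle_lt_trans; [apply Rabs_triang|].
  assert (M * Rabs (y'-y) + M * Rabs (x'-x) <= M * (2 * (eps/(2*M+2)))) by nra.
  assert (M * (2 * (eps / (2 * M + 2))) < eps).
  { replace (M * (2 * (eps / (2 * M + 2)))) with (eps * (2*M / (2*M+2))) by (field; lra).
    assert (2 * M / (2 * M + 2) < 1). { apply Rmult_lt_reg_r with (2*M+2); [lra|].
      unfold Rdiv; rewrite Rmult_assoc, Rinv_l by lra. lra. } nra. }
  lra.
Qed.


Record cf := mkcf { cr : nat -> R; ci : nat -> R; ce : nat -> nat }.
Definition dxc (b : cf) : cf := mkcf (fun k => INR (ce b k) * cr b k)
  (fun k => INR (ce b k) * ci b k) (fun k => pred (ce b k)).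
Definition dyc (b : cf) : cf := mkcf (fun k => - (INR (ce b k) * ci b k))
  (fun k => INR (ce b k) * cr b k) (fun k => pred (ce b k)).
Definition wt (b : cf) k := Rabs (cr b k) + Rabs (ci b k).
Definition summW (w : nat -> R) (m : nat -> nat) :=
  forall s, 0 <= s < 1 -> exists l, infinite_sum (fun k => w k * s ^ m k) l.
Definition summ b := summW (wt b) (ce b).
Definition term b k x y := re_term (cr b k) (ci b k) (ce b k) x y.
Definition Ser b x y := ser (fun k => term b k x y).

Lemma wt_pos b k : 0 <= wt b k.
Proof. unfold wt; pose proof (Rabs_pos (cr b k)); pose proof (Rabs_pos (ci b k)); lra. Qed.

Lemma wt_dxc b k : wt (dxc b) k = INR (ce b k) * wt b k.
Proof. unfold wt, dxc; simpl. rewrite !Rabs_mult, (Rabs_right (INR _)) by (apply Rle_ge, pos_INR); ring. Qed.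
Lemma wt_dyc b k : wt (dyc b) k = INR (ce b k) * wt b k.
Proof. unfold wt, dyc; simpl. rewrite Rabs_Ropp, !Rabs_mult, (Rabs_right (INR _)) by (apply Rle_ge, pos_INR); ring. Qed.

Lemma pow_le1 t j : 0 <= t <= 1 -> t ^ j <= 1.
Proof. intros H; induction j; simpl; [lra|]. assert (0 <= t ^ j) by (apply pow_le; lra). nra. Qed.

Lemma pow_lin t j : 0 <= t < 1 -> INR (S j) * t ^ j * (1 - t) <= 1 - t ^ (S j).
Proof.
  intros Ht. induction j.
  - simpl; lra.
  - rewrite (S_INR (S j)). simpl pow in *. set (a := INR (S j)) in *.
    assert (0 <= t ^ j) by (apply pow_le; lra).
    assert (t ^ j <= 1) by (apply pow_le1; lra).
    assert (t * (a * t ^ j * (1 - t)) <= t * (1 - t * t ^ j)) by (apply Rmult_le_compat_l; lra).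
    assert (t * t ^ j * (1 - t) <= 1 * (1 - t)) by (apply Rmult_le_compat_r; nra).
    nra.
Qed.

Lemma summW_deriv w m : (forall k, 0 <= w k) -> summW w m ->
  summW (fun k => INR (m k) * w k) (fun k => pred (m k)).
Proof.
  intros Hw H s Hs.
  set (sg := (1 + s) / 2). set (tau := s / sg).
  assert (Hsg : 0 < sg < 1) by (unfold sg; lra).
  assert (Htau : 0 <= tau < 1).
  { unfold tau. split. unfold Rdiv; apply Rmult_le_pos; [lra|]; left; apply Rinv_0_lt_compat; lra.
    apply Rmult_lt_reg_r with sg; [lra|]. unfold Rdiv; rewrite Rmult_assoc, Rinv_l by lra. unfold sg; lra. }
  set (K := / ((1 - tau) * sg)).
  assert (HK : 0 < K) by (unfold K; apply Rinv_0_lt_compat; nra).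
  assert (Hb : forall j, INR j * s ^ pred j <= K * sg ^ j).
  { intros [|j]. simpl. rewrite Rmult_0_l; lra.
    simpl pred. assert (E : s = tau * sg) by (unfold tau; field; lra).
    rewrite E, Rpow_mult_distr. pose proof (pow_lin tau j Htau).
    assert (0 <= tau ^ j) by (apply pow_le; lra). assert (0 < sg ^ j) by (apply pow_lt; lra).
    assert (INR (S j) * tau ^ j * (1 - tau) <= 1) by (pose proof (pow_le tau (S j)); lra).
    replace (K * sg ^ S j) with (sg ^ j / (1 - tau)) by (unfold K; simpl; field; lra).
    apply Rmult_le_reg_r with (1 - tau); [lra|].
    assert (E2 : sg ^ j / (1-tau) * (1-tau) = sg^j) by (field; lra). rewrite E2. nra. }
  destruct (H sg (conj (Rlt_le _ _ (proj1 Hsg)) (proj2 Hsg))) as [L HL].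
  apply (isum_comp_nonneg _ (fun k => K * (w k * sg ^ m k))).
  - intros k. split. apply Rmult_le_pos. apply Rmult_le_pos; auto using pos_INR.
    apply pow_le; lra.
    specialize (Hb (m k)). specialize (Hw k). nra.
  - exists (K * L). apply isum_scal; auto.
Qed.

Lemma summ_dxc b : summ b -> summ (dxc b).
Proof.
  intros H s Hs. destruct (summW_deriv (wt b) (ce b) (wt_pos b) H s Hs) as [l Hl].
  exists l. intros eps He; destruct (Hl eps He) as [N HN]; exists N; intros m Hm.
  erewrite sum_eq; [apply HN; auto|]. intros; rewrite wt_dxc; reflexivity.
Qed.
Lemma summ_dyc b : summ b -> summ (dyc b).
Proof.
  intros H s Hs. destruct (summW_deriv (wt b) (ce b) (wt_pos b) H s Hs) as [l Hl].
  exists l. intros eps He; destruct (Hl eps He) as [N HN]; exists N; intros m Hm.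
  erewrite sum_eq; [apply HN; auto|]. intros; rewrite wt_dyc; reflexivity.
Qed.

Lemma term_bound b k x y s : 0 <= s -> x*x+y*y <= s*s ->
  Rabs (term b k x y) <= wt b k * s ^ ce b k.
Proof. intros; apply re_term_bound; auto. Qed.

Lemma Ser_conv_s b s x y : summ b -> 0 <= s < 1 -> x*x+y*y <= s*s ->
  infinite_sum (fun k => term b k x y) (Ser b x y).
Proof.
  intros Hb Hs Hxy. apply ser_spec.
  apply (isum_conv_abs _ (fun k => wt b k * s ^ ce b k)).
  intros; apply term_bound; lra. apply Hb; auto.
Qed.

Lemma disc_sqrt x y : in_disc x y -> exists s, 0 <= s < 1 /\ x*x+y*y <= s*s.
Proof.
  intros H. unfold in_disc in H. exists (sqrt (x*x+y*y)).
  assert (0 <= x*x+y*y) by nra.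
  split; [split|]. apply sqrt_pos. apply Rlt_le_trans with (sqrt 1); [apply sqrt_lt_1_alt; split; lra | rewrite sqrt_1; lra].
  rewrite sqrt_sqrt; lra.
Qed.

Lemma Ser_conv b x y : summ b -> in_disc x y ->
  infinite_sum (fun k => term b k x y) (Ser b x y).
Proof. intros Hb H. destruct (disc_sqrt x y H) as [s [Hs Hxy]]. eapply Ser_conv_s; eauto. Qed.

Lemma Ser_bound b s : summ b -> 0 <= s < 1 -> exists L,
  forall x y, x*x+y*y <= s*s -> Rabs (Ser b x y) <= L.
Proof.
  intros Hb Hs. destruct (Hb s Hs) as [L HL]. exists L. intros x y Hxy.
  apply (isum_abs_le _ _ _ _ (Ser_conv_s b s x y Hb Hs Hxy) HL).
  intros; apply term_bound; lra.
Qed.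

Lemma sq_near a a' d : Rabs (a' - a) < d -> d <= 1 -> -1 <= a <= 1 -> a' * a' <= a * a + 3 * d.
Proof.
  intros H Hd Ha. apply Rlt_le, Rabs_le_between in H.
  set (e := a' - a) in *. replace a' with (a + e) by (unfold e; ring).
  assert (-3 <= 2 * a + e <= 3) by lra.
  assert (e * (2*a+e) <= 3 * d).
  { destruct (Rle_dec 0 e); nra. }
  nra.
Qed.

Lemma nbhd x y : in_disc x y -> exists s d, 0 <= s < 1 /\ d > 0 /\
  forall x' y', Rabs (x' - x) < d -> Rabs (y' - y) < d -> x'*x'+y'*y' <= s*s.
Proof.
  intros H. unfold in_disc in H. set (r2 := x*x+y*y) in *.
  exists (sqrt ((1 + r2)/2)), (Rmin 1 ((1 - r2)/12)).
  assert (0 <= r2) by (unfold r2; nra).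
  split; [split|split].
  - apply sqrt_pos.
  - apply Rlt_le_trans with (sqrt 1); [apply sqrt_lt_1_alt; split; lra | rewrite sqrt_1; lra].
  - apply Rmin_pos; lra.
  - intros x' y' Hx Hy. rewrite sqrt_sqrt by lra.
    assert (d1 : Rmin 1 ((1 - r2)/12) <= 1) by apply Rmin_l.
    assert (d2 : Rmin 1 ((1 - r2)/12) <= (1 - r2)/12) by apply Rmin_r.
    set (d := Rmin 1 ((1 - r2)/12)) in *.
    assert (-1 <= x <= 1) by (unfold r2 in *; split; nra).
    assert (-1 <= y <= 1) by (unfold r2 in *; split; nra).
    pose proof (sq_near x x' d Hx d1 H1). pose proof (sq_near y y' d Hy d1 H2).
    unfold r2 in *; lra.
Qed.

Lemma disc_of s x y : 0 <= s < 1 -> x*x+y*y <= s*s -> in_disc x y.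
Proof. intros; unfold in_disc; nra. Qed.

Lemma Ser_dx b x y : summ b -> in_disc x y ->
  derivable_pt_lim (fun t => Ser b t y) x (Ser (dxc b) x y).
Proof.
  intros Hb H. destruct (nbhd x y H) as [s [d [Hs [Hd Hn]]]].
  assert (Hy : Rabs (y - y) < d) by (rewrite Rminus_diag, Rabs_R0; lra).
  apply (series_deriv (fun k t => term b k t y) (fun k t => term (dxc b) k t y)
     (fun k t => term (dxc (dxc b)) k t y) (fun t => Ser b t y) _
     (fun k => wt (dxc (dxc b)) k * s ^ ce (dxc (dxc b)) k) x d Hd).
  - intros k t Ht. split; [|split].
    + exact (re_term_dx _ _ _ _ _).
    + exact (re_term_dx _ _ _ _ _).
    + apply term_bound; [lra| apply Hn; auto].
  - intros t Ht. apply (Ser_conv_s b s); auto.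
  - apply (Ser_conv_s (dxc b) s); auto using summ_dxc. apply Hn; auto.
    rewrite Rminus_diag, Rabs_R0; lra.
  - apply (summ_dxc (dxc b)); auto using summ_dxc.
Qed.

Lemma Ser_dy b x y : summ b -> in_disc x y ->
  derivable_pt_lim (fun t => Ser b x t) y (Ser (dyc b) x y).
Proof.
  intros Hb H. destruct (nbhd x y H) as [s [d [Hs [Hd Hn]]]].
  assert (Hx : Rabs (x - x) < d) by (rewrite Rminus_diag, Rabs_R0; lra).
  apply (series_deriv (fun k t => term b k x t) (fun k t => term (dyc b) k x t)
     (fun k t => term (dyc (dyc b)) k x t) (fun t => Ser b x t) _
     (fun k => wt (dyc (dyc b)) k * s ^ ce (dyc (dyc b)) k) y d Hd).
  - intros k t Ht. split; [|split].
    + exact (re_term_dy _ _ _ _ _).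
    + exact (re_term_dy _ _ _ _ _).
    + apply term_bound; [lra| apply Hn; auto].
  - intros t Ht. apply (Ser_conv_s b s); auto.
  - apply (Ser_conv_s (dyc b) s); auto using summ_dyc. apply Hn; auto.
    rewrite Rminus_diag, Rabs_R0; lra.
  - apply (summ_dyc (dyc b)); auto using summ_dyc.
Qed.

Lemma Ser_cont b x y : summ b -> in_disc x y -> cont2_at (Ser b) x y.
Proof.
  intros Hb H. destruct (nbhd x y H) as [s [d [Hs [Hd Hn]]]].
  destruct (Ser_bound (dxc b) s (summ_dxc b Hb) Hs) as [L1 HL1].
  destruct (Ser_bound (dyc b) s (summ_dyc b Hb) Hs) as [L2 HL2].
  apply (cont2_from (Ser b) (Ser (dxc b)) (Ser (dyc b)) x y d (Rmax L1 L2) Hd).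
  intros x' y' Hx Hy. pose proof (Hn x' y' Hx Hy) as Hp.
  pose proof (disc_of s x' y' Hs Hp).
  split; [|split; [|split]].
  - apply Ser_dx; auto.
  - apply Ser_dy; auto.
  - eapply Rle_trans; [apply HL1; auto| apply Rmax_l].
  - eapply Rle_trans; [apply HL2; auto| apply Rmax_r].
Qed.

Lemma isum_ext f g l : (forall k, f k = g k) -> infinite_sum f l -> infinite_sum g l.
Proof. intros E H eps He; destruct (H eps He) as [N HN]; exists N; intros m Hm.
  erewrite sum_eq; [apply HN; auto|]. intros; symmetry; auto. Qed.

Lemma isum_zero : infinite_sum (fun _ => 0) 0.
Proof. intros eps He; exists O; intros m _. unfold Rdist.
  replace (sum_f_R0 (fun _ => 0) m) with 0. rewrite Rminus_diag, Rabs_R0; lra.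
  induction m; simpl; lra. Qed.

Lemma Ser_laplace b x y : summ b -> in_disc x y ->
  Ser (dxc (dxc b)) x y + Ser (dyc (dyc b)) x y = 0.
Proof.
  intros Hb H.
  pose proof (isum_plus _ _ _ _ (Ser_conv (dxc (dxc b)) x y (summ_dxc _ (summ_dxc _ Hb)) H)
     (Ser_conv (dyc (dyc b)) x y (summ_dyc _ (summ_dyc _ Hb)) H)) as Hs.
  apply (isum_unique (fun k => term (dxc (dxc b)) k x y + term (dyc (dyc b)) k x y)); auto.
  apply (isum_ext (fun _ => 0)); [|exact isum_zero].
  intros k; unfold term, re_term; simpl; ring.
Qed.

Lemma harmonic_of_summ b : summ b -> harmonic_disc (Ser b).
Proof.
  intros Hb.
  assert (H1 := summ_dxc b Hb). assert (H2 := summ_dyc b Hb).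
  exists (Ser (dxc b)), (Ser (dyc b)), (Ser (dxc (dxc b))), (Ser (dyc (dxc b))),
         (Ser (dxc (dyc b))), (Ser (dyc (dyc b))).
  intros x y H.
  repeat split; auto using Ser_dx, Ser_dy, Ser_cont, summ_dxc, summ_dyc, Ser_laplace.
Qed.


Lemma v_mono v : standing_weight v -> forall a b, 0 <= a -> a <= b -> b < 1 -> v a <= v b.
Proof.
  intros [_ [_ [Hinc _]]] a b Ha Hab Hb. destruct (Req_dec a b) as [->|Hne]; [lra|].
  left; apply Hinc; lra.
Qed.

Lemma v_ge1 v : standing_weight v -> forall a, 0 <= a < 1 -> 1 <= v a.
Proof. intros [_ [H _]]; auto. Qed.

Lemma inv_arg a : 1 <= a -> 0 <= 1 - / a < 1.
Proof.
  intros Ha. assert (0 < / a) by (apply Rinv_0_lt_compat; lra).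
  assert (/ a <= 1) by (rewrite <- Rinv_1; apply Rinv_le_contravar; lra). lra.
Qed.

Lemma g_mono v : standing_weight v -> forall a b, 1 <= a -> a <= b -> gfun v a <= gfun v b.
Proof.
  intros Hv a b Ha Hab. unfold gfun. pose proof (inv_arg a Ha); pose proof (inv_arg b ltac:(lra)).
  apply (v_mono v Hv); try lra.
  assert (/ b <= / a) by (apply Rinv_le_contravar; lra). lra.
Qed.

Lemma g_ge1 v : standing_weight v -> forall a, 1 <= a -> 1 <= gfun v a.
Proof. intros Hv a Ha. unfold gfun. apply (v_ge1 v Hv). apply inv_arg; auto. Qed.

Lemma g_dbl v D : (forall d, 0 < d <= 1/2 -> v (1 - d) <= D * v (1 - 2 * d)) ->
  forall z, 1 <= z -> gfun v (2 * z) <= D * gfun v z.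
Proof.
  intros H z Hz. unfold gfun.
  assert (E : / z = 2 * / (2 * z)) by (field; lra).
  rewrite E. apply H. split. apply Rinv_0_lt_compat; lra.
  apply Rle_trans with (/ 2). apply Rinv_le_contravar; lra. lra.
Qed.

Lemma g_inv v t : 0 < t -> gfun v (/ t) = v (1 - t).
Proof. intros; unfold gfun; rewrite Rinv_inv; reflexivity. Qed.

Lemma pow2_ge j : INR j + 1 <= 2 ^ j.
Proof. induction j; [simpl; lra|]. rewrite S_INR. simpl pow. pose proof (pos_INR j). lra. Qed.

Lemma pow_ge1 x j : 1 <= x -> 1 <= x ^ j.
Proof. intros H; induction j; simpl; [lra|]. nra. Qed.

Lemma g_poly v D : standing_weight v -> (forall d, 0 < d <= 1/2 -> v (1 - d) <= D * v (1 - 2 * d)) ->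
  exists p : nat, forall x y, 1 <= y -> y <= x -> gfun v x <= 2 ^ p * (x / y) ^ p * gfun v y.
Proof.
  intros Hv HD. destruct (INR_unbounded D) as [p Hp]. exists p.
  assert (HDp : D <= 2 ^ p) by (pose proof (pow2_ge p); lra).
  assert (H2p : 1 <= 2 ^ p) by (apply pow_ge1; lra).
  assert (key : forall j x y, 1 <= y -> y <= x -> x <= 2 ^ j * y ->
      gfun v x <= 2 ^ p * (x / y) ^ p * gfun v y).
  { induction j; intros x y Hy Hyx Hxj.
    - simpl in Hxj. assert (x = y) by lra. subst.
      replace (y / y) with 1 by (field; lra). rewrite pow1.
      pose proof (g_ge1 v Hv y Hy). nra.
    - assert (Hxy1 : 1 <= (x / y) ^ p).
      { apply pow_ge1. apply Rmult_le_reg_r with y; [lra|].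
        unfold Rdiv; rewrite Rmult_assoc, Rinv_l by lra; lra. }
      assert (Hgy := g_ge1 v Hv y Hy).
      destruct (Rle_dec x (2 * y)) as [Hx2|Hx2].
      + apply Rle_trans with (gfun v (2 * y)). apply (g_mono v Hv); lra.
        eapply Rle_trans. apply (g_dbl v D HD y Hy).
        assert (D * gfun v y <= 2 ^ p * gfun v y) by (apply Rmult_le_compat_r; lra).
        assert (2^p * gfun v y * 1 <= 2^p * gfun v y * (x/y)^p) by (apply Rmult_le_compat_l; nra).
        nra.
      + set (z := x / 2). assert (Ex : x = 2 * z) by (unfold z; field).
        assert (Hz1 : y <= z) by (unfold z; lra).
        assert (Hz2 : z <= 2 ^ j * y) by (unfold z; simpl in Hxj; lra).
        specialize (IHj z y Hy Hz1 Hz2).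
        rewrite Ex. eapply Rle_trans. apply (g_dbl v D HD z); lra.
        assert (Hgz := g_ge1 v Hv z ltac:(lra)).
        apply Rle_trans with (2 ^ p * gfun v z). apply Rmult_le_compat_r; lra.
        replace ((2 * z / y) ^ p) with (2 ^ p * (z / y) ^ p).
        2:{ rewrite <- Rpow_mult_distr. f_equal. field. lra. }
        assert (0 <= 2 ^ p) by lra. nra. }
  intros x y Hy Hyx. destruct (INR_unbounded x) as [j Hj].
  apply (key j); auto. pose proof (pow2_ge j). nra.
Qed.

Lemma exp_pow a n : exp a ^ n = exp (INR n * a).
Proof.
  induction n. simpl. rewrite Rmult_0_l, exp_0; reflexivity.
  simpl pow. rewrite IHn, <- exp_plus, S_INR. f_equal; ring.
Qed.

Lemma pow_exp_bound t n : 0 < t <= 1 -> (1 - t) ^ n <= exp (- (INR n * t)).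
Proof.
  intros Ht. replace (- (INR n * t)) with (INR n * (- t)) by ring. rewrite <- exp_pow.
  apply pow_incr. split. lra. pose proof (exp_ineq1_le (- t)); lra.
Qed.

Lemma poly_exp_bound N s : (1 <= N)%nat -> 0 <= s -> s ^ N <= INR N ^ N * exp s.
Proof.
  intros HN Hs. assert (HN' : 1 <= INR N) by (apply (le_INR 1); auto).
  assert (E : exp s = exp (s / INR N) ^ N) by (rewrite exp_pow; f_equal; field; lra).
  rewrite E. replace (s ^ N) with (INR N ^ N * (s / INR N) ^ N).
  2:{ rewrite <- Rpow_mult_distr. f_equal. field. lra. }
  apply Rmult_le_compat_l. apply pow_le; lra.
  apply pow_incr. split. unfold Rdiv; apply Rmult_le_pos; [lra| left; apply Rinv_0_lt_compat; lra].
  pose proof (exp_ineq1_le (s / INR N)); lra.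
Qed.


Lemma classc v p x t m : standing_weight v ->
  (forall x y, 1 <= y -> y <= x -> gfun v x <= 2 ^ p * (x / y) ^ p * gfun v y) ->
  0 < t <= 1 -> / t < x -> INR m = x ->
  gfun v x * (1 - t) ^ m <= 2 ^ p * INR (S p) ^ (S p) * v (1 - t) / (x * t).
Proof.
  intros Hv Hp Ht Hx Hm.
  assert (HT : 1 <= / t) by (rewrite <- Rinv_1; apply Rinv_le_contravar; lra).
  set (s := x * t).
  assert (Hs : 1 < s).
  { unfold s. apply Rmult_lt_reg_r with (/ t). apply Rinv_0_lt_compat; lra.
    rewrite Rmult_assoc, Rinv_r by lra. lra. }
  assert (H1 : gfun v x <= 2 ^ p * s ^ p * v (1 - t)).
  { rewrite <- (g_inv v t) by lra. replace s with (x / / t).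
    apply Hp; lra. unfold s, Rdiv; rewrite Rinv_inv; reflexivity. }
  assert (H2 : (1 - t) ^ m <= exp (- s)) by (unfold s; rewrite <- Hm; apply pow_exp_bound; lra).
  assert (H3 := poly_exp_bound (S p) s ltac:(lia) ltac:(lra)).
  assert (Hv1 : 1 <= v (1 - t)) by (apply (v_ge1 v Hv); lra).
  assert (Hsp : 0 <= s ^ p) by (apply pow_le; lra).
  assert (Hp2 : 0 < 2 ^ p) by (apply pow_lt; lra).
  assert (Hrm : 0 <= (1 - t) ^ m) by (apply pow_le; lra).
  assert (Hgx : 0 <= gfun v x) by (pose proof (g_ge1 v Hv x ltac:(lra)); lra).
  apply Rle_trans with (2 ^ p * s ^ p * v (1 - t) * exp (- s)).
  { apply Rle_trans with (2 ^ p * s ^ p * v (1 - t) * (1 - t) ^ m).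
    apply Rmult_le_compat_r; auto. apply Rmult_le_compat_l; auto. nra. }
  assert (E : s ^ p * exp (- s) = s ^ (S p) * exp (- s) / s) by (simpl; field; lra).
  assert (H4 : s ^ (S p) * exp (- s) <= INR (S p) ^ (S p)).
  { rewrite exp_Ropp. pose proof (exp_pos s).
    apply Rmult_le_reg_r with (exp s); auto. rewrite Rmult_assoc, Rinv_l by lra. lra. }
  replace (2 ^ p * s ^ p * v (1 - t) * exp (- s)) with (2 ^ p * v (1 - t) * (s ^ p * exp (- s))) by ring.
  rewrite E. unfold Rdiv.
  assert (0 < / s) by (apply Rinv_0_lt_compat; lra).
  assert (0 <= s ^ S p * exp (-s)) by (apply Rmult_le_pos; [apply pow_le; lra| left; apply exp_pos]).
  assert (s ^ S p * exp (- s) * / s <= INR (S p) ^ S p * / s) by (apply Rmult_le_compat_r; lra).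
  assert (0 <= 2 ^ p * v (1 - t)) by nra.
  assert (2 ^ p * v (1 - t) * (s ^ S p * exp (- s) * / s) <= 2 ^ p * v (1 - t) * (INR (S p) ^ S p * / s))
    by (apply Rmult_le_compat_l; auto).
  lra.
Qed.

Lemma sumA (X : nat -> R) G Y : (forall k, 1 <= X k) -> (forall k, X k + 1 <= X (S k)) ->
  1 <= Y -> 0 <= G ->
  forall N, sum_f_R0 (fun k => if Rle_dec (X k) Y then G else 0) N <= Y * G.
Proof.
  intros H1 Hinc HY HG N.
  assert (forall N, sum_f_R0 (fun k => if Rle_dec (X k) Y then G else 0) N <= X N * G /\
                    sum_f_R0 (fun k => if Rle_dec (X k) Y then G else 0) N <= Y * G).
  { induction N0 as [|N0 IH].
    - simpl. pose proof (H1 0%nat). destruct (Rle_dec (X 0%nat) Y); split; nra.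
    - simpl. destruct IH as [I1 I2]. pose proof (Hinc N0). pose proof (H1 N0).
      destruct (Rle_dec (X (S N0)) Y); split; nra. }
  apply H.
Qed.

Lemma sumB (X : nat -> R) (g : R -> R) Y T A :
  (forall k, 1 <= X k) -> (forall k, X k <= X (S k)) -> 1 <= Y -> 1 <= T -> A > 1 ->
  (forall a b, 1 <= a -> a <= b -> g a <= g b) -> (forall a, 1 <= a -> 0 <= g a) ->
  (forall k, Y < X k -> g (X (S k)) > A * g (X k)) ->
  forall N, sum_f_R0 (fun k => if Rlt_dec Y (X k) then (if Rle_dec (X k) T then g (X k) else 0) else 0) N
     <= A / (A - 1) * g T.
Proof.
  intros H1 Hinc HY HT HA Hm Hp Hgr N.
  set (b := fun k => if Rlt_dec Y (X k) then (if Rle_dec (X k) T then g (X k) else 0) else 0).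
  assert (HAA : 1 <= A / (A - 1)).
  { apply Rmult_le_reg_r with (A - 1); [lra|]. unfold Rdiv; rewrite Rmult_assoc, Rinv_l by lra. lra. }
  assert (HAe : A / (A - 1) = / (A - 1) * A) by (field; lra).
  assert (Hinv : 0 < / (A - 1)) by (apply Rinv_0_lt_compat; lra).
  assert (I : forall N, sum_f_R0 b N <= A / (A - 1) * g T /\
     (X N <= T -> sum_f_R0 b N <= A / (A - 1) * g (X N)) /\
     (X N <= Y -> sum_f_R0 b N = 0)).
  { induction N0 as [|N0 [I1 [I2 I3]]].
    - simpl. unfold b. pose proof (H1 0%nat). pose proof (Hp _ (H1 0%nat)). pose proof (Hp T HT).
      destruct (Rlt_dec Y (X 0%nat)); [destruct (Rle_dec (X 0%nat) T)|].
      + pose proof (Hm _ _ (H1 0%nat) r0). repeat split; intros; try nra.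
      + repeat split; intros; try nra.
      + repeat split; intros; try nra.
    - simpl. pose proof (Hinc N0). pose proof (H1 N0). pose proof (H1 (S N0)).
      pose proof (Hp _ (H1 N0)). pose proof (Hp _ (H1 (S N0))). pose proof (Hp T HT).
      change (b (S N0)) with (if Rlt_dec Y (X (S N0)) then (if Rle_dec (X (S N0)) T then g (X (S N0)) else 0) else 0).
      destruct (Rlt_dec Y (X (S N0))); [destruct (Rle_dec (X (S N0)) T)|].
      + pose proof (Hm _ _ (H1 (S N0)) r0).
        assert (S1 : sum_f_R0 b N0 + g (X (S N0)) <= A / (A - 1) * g (X (S N0))).
        { destruct (Rle_dec (X N0) Y) as [HyN|HyN].
          - rewrite (I3 HyN). nra.
          - specialize (Hgr N0 ltac:(lra)). specialize (I2 ltac:(lra)).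
            rewrite HAe in *. 
            assert (/ (A - 1) * A * g (X N0) <= / (A - 1) * g (X (S N0))).
            { rewrite Rmult_assoc. apply Rmult_le_compat_l; lra. }
            assert (/ (A - 1) * A * g (X (S N0)) = / (A - 1) * g (X (S N0)) + g (X (S N0))) by (field; lra).
            lra. }
        repeat split; intros; try nra.
      + repeat split; intros; try nra.
      + assert (HXY : X N0 <= Y) by lra. rewrite (I3 HXY).
        repeat split; intros; try nra. }
  apply I.
Qed.

Lemma sumC (X : nat -> R) t lam : (forall k, 1 <= X k) -> (forall k, X (S k) >= lam * X k) ->
  0 < t -> lam > 1 ->
  forall N, sum_f_R0 (fun k => if Rlt_dec (/ t) (X k) then / (X k * t) else 0) N <= lam / (lam - 1).
Proof.
  intros H1 Hg Ht Hl N.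
  set (e := fun k => if Rlt_dec (/ t) (X k) then / (X k * t) else 0).
  assert (Hl1 : 0 < / (lam - 1)) by (apply Rinv_0_lt_compat; lra).
  assert (Hconv : forall x, / t < x -> 1 < x * t).
  { intros x Hx. apply Rmult_lt_compat_r with (r := t) in Hx; auto. rewrite Rinv_l in Hx; lra. }
  assert (Hconv' : forall x, 0 < x -> x <= / t -> x * t <= 1).
  { intros x Hx0 Hx. apply Rmult_le_compat_r with (r := t) in Hx; [|lra]. rewrite Rinv_l in Hx; lra. }
  assert (I : forall N, (X N <= / t -> sum_f_R0 e N = 0) /\
      (/ t < X N -> sum_f_R0 e N <= (lam - / (X N * t)) / (lam - 1))).
  { induction N0 as [|N0 [I1 I2]].
    - simpl. unfold e. destruct (Rlt_dec (/ t) (X 0%nat)) as [h|h]; split; intros; try lra.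
      pose proof (Hconv _ h). set (s := X 0%nat * t) in *.
      assert (0 < / s < 1) by (split; [apply Rinv_0_lt_compat; lra| rewrite <- Rinv_1; apply Rinv_lt_contravar; lra]).
      apply Rmult_le_reg_r with (lam - 1); [lra|].
      replace ((lam - / s) / (lam - 1) * (lam - 1)) with (lam - / s) by (field; lra). nra.
    - simpl. change (e (S N0)) with (if Rlt_dec (/ t) (X (S N0)) then / (X (S N0) * t) else 0). pose proof (H1 N0). pose proof (H1 (S N0)). pose proof (Hg N0).
      destruct (Rlt_dec (/ t) (X (S N0))) as [h|h]; split; intros; try lra.
      + pose proof (Hconv _ h). set (s' := X (S N0) * t) in *.
        assert (Hs' : 0 < / s' < 1) by (split; [apply Rinv_0_lt_compat; lra| rewrite <- Rinv_1; apply Rinv_lt_contravar; lra]).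
        destruct (Rle_dec (X N0) (/ t)) as [h0|h0].
        * rewrite (I1 h0).
          apply Rmult_le_reg_r with (lam - 1); [lra|].
          replace ((lam - / s') / (lam - 1) * (lam - 1)) with (lam - / s') by (field; lra).
          replace ((0 + / s') * (lam - 1)) with (lam * / s' - / s') by ring.
          assert (lam * / s' <= lam * 1) by (apply Rmult_le_compat_l; lra). lra.
        * assert (h0' : / t < X N0) by lra. specialize (I2 h0').
          pose proof (Hconv _ h0'). set (s := X N0 * t) in *.
          assert (Hss : s' >= lam * s) by (unfold s, s'; nra).
          assert (lam * / s' <= / s).
          { apply Rmult_le_reg_r with (s * s'); [nra|].
            replace (lam * / s' * (s * s')) with (lam * s) by (field; lra).
            replace (/ s * (s * s')) with s' by (field; lra). lra. }
          apply Rle_trans with ((lam - / s) / (lam - 1) + / s'). lra.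
          apply Rmult_le_reg_r with (lam - 1); [lra|].
          replace (((lam - / s) / (lam - 1) + / s') * (lam - 1)) with (lam - / s + (lam - 1) * / s') by (field; lra).
          replace ((lam - / s') / (lam - 1) * (lam - 1)) with (lam - / s') by (field; lra).
          lra.
      + assert (HX0 : X N0 <= / t) by nra. rewrite (I1 HX0). lra. }
  destruct (Rle_dec (X N) (/ t)) as [h|h].
  - rewrite (proj1 (I N) h). apply Rlt_le, Rdiv_lt_0_compat; lra.
  - apply Rle_trans with ((lam - / (X N * t)) / (lam - 1)). apply (proj2 (I N)); lra.
    assert (0 < / (X N * t)) by (apply Rinv_0_lt_compat; pose proof (H1 N); nra).
    unfold Rdiv. apply Rmult_le_compat_r; lra.
Qed.


Lemma main_est (v : R -> R) (Hv : standing_weight v) (Hd : doubling v)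
  (Hg : forall q, q > 1 -> exists A, A > 1 /\ exists y0,
          forall y x, y > y0 -> 1 <= y -> x > q * y -> gfun v x > A * gfun v y)
  (n : nat -> nat) (lambda : R) (Hlam : lambda > 1)
  (Hn0 : (1 <= n 0)%nat)
  (Hgap : forall k, INR (n (S k)) >= lambda * INR (n k)) :
  exists K, K > 0 /\ forall r, 0 <= r < 1 -> forall N,
    sum_f_R0 (fun k => gfun v (INR (n k)) * r ^ n k) N <= K * v r.
Proof.
  destruct Hd as [D [HD1 HD]].
  destruct (g_poly v D Hv HD) as [p Hp].
  set (X := fun k => INR (n k)).
  assert (HX1 : forall k, 1 <= X k).
  { induction k. unfold X. apply (le_INR 1) in Hn0. simpl in Hn0. exact Hn0.
    pose proof (Hgap k). unfold X in *. nra. }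
  assert (HXg : forall k, X (S k) >= lambda * X k) by exact Hgap.
  assert (HXinc : forall k, X k + 1 <= X (S k)).
  { intros k. pose proof (HXg k). pose proof (HX1 k).
    assert (INR (n k) < INR (n (S k))) by (unfold X in *; nra).
    apply INR_lt in H1. apply le_INR in H1. rewrite S_INR in H1. unfold X; lra. }
  set (q := (1 + lambda) / 2).
  destruct (Hg q ltac:(unfold q; lra)) as [A [HA [y0 Hy0]]].
  set (Y := Rmax y0 1).
  assert (HY1 : 1 <= Y) by apply Rmax_r.
  assert (Hgr : forall k, Y < X k -> gfun v (X (S k)) > A * gfun v (X k)).
  { intros k Hk. apply Hy0. pose proof (Rmax_l y0 1); unfold Y in *; lra. apply HX1.
    pose proof (HXg k); pose proof (HX1 k). unfold q; nra. }
  set (Kc := 2 ^ p * INR (S p) ^ (S p)).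
  assert (HKc : 0 <= Kc) by (unfold Kc; apply Rmult_le_pos; apply pow_le; [lra| apply pos_INR]).
  assert (HgY := g_ge1 v Hv Y HY1).
  assert (HAA : 0 < A / (A - 1)) by (apply Rdiv_lt_0_compat; lra).
  assert (HLL : 0 < lambda / (lambda - 1)) by (apply Rdiv_lt_0_compat; lra).
  exists (Y * gfun v Y + A / (A - 1) + Kc * (lambda / (lambda - 1)) + 1).
  split. { assert (0 <= Kc * (lambda / (lambda - 1))) by nra. nra. }
  intros r Hr N. set (t := 1 - r).
  assert (Ht : 0 < t <= 1) by (unfold t; lra).
  assert (Er : r = 1 - t) by (unfold t; ring).
  assert (Hvr : 1 <= v r) by (apply (v_ge1 v Hv); lra).
  set (a := fun k => if Rle_dec (X k) Y then gfun v Y else 0).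
  set (b := fun k => if Rlt_dec Y (X k) then (if Rle_dec (X k) (/ t) then gfun v (X k) else 0) else 0).
  set (e := fun k => if Rlt_dec (/ t) (X k) then / (X k * t) else 0).
  assert (Hterm : forall k, gfun v (X k) * r ^ n k <= a k + b k + (Kc * v r) * e k).
  { intros k. pose proof (HX1 k) as Hk1.
    assert (Hr0 : 0 <= r ^ n k) by (apply pow_le; lra).
    assert (Hr1 : r ^ n k <= 1) by (apply pow_le1; lra).
    assert (Hgk := g_ge1 v Hv (X k) Hk1).
    assert (He : 0 <= e k).
    { unfold e. destruct (Rlt_dec (/ t) (X k)); [|lra]. left; apply Rinv_0_lt_compat; nra. }
    assert (Hb : 0 <= b k).
    { unfold b. destruct (Rlt_dec Y (X k)); [destruct (Rle_dec (X k) (/ t))|]; lra. }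
    assert (Hce : 0 <= Kc * v r * e k) by (apply Rmult_le_pos; [nra| auto]).
    unfold a. destruct (Rle_dec (X k) Y) as [h1|h1].
    - pose proof (g_mono v Hv (X k) Y Hk1 h1). nra.
    - unfold b. destruct (Rlt_dec Y (X k)) as [h2|h2]; [|lra].
      destruct (Rle_dec (X k) (/ t)) as [h3|h3].
      + nra.
      + unfold e. destruct (Rlt_dec (/ t) (X k)) as [h4|h4]; [|lra].
        pose proof (classc v p (X k) t (n k) Hv Hp Ht h4 eq_refl) as Hc.
        unfold Rdiv in Hc. unfold Kc. rewrite Er. lra. }
  eapply Rle_trans. apply sum_Rle. intros k _. apply (Hterm k).
  rewrite !sum_f_plus, sum_f_scal.
  assert (SA := sumA X (gfun v Y) Y HX1 HXinc HY1 ltac:(lra) N).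
  assert (SB := sumB X (gfun v) Y (/ t) A HX1 ltac:(intros k; pose proof (HXinc k); lra) HY1
     ltac:(rewrite <- Rinv_1; apply Rinv_le_contravar; lra) HA
     (g_mono v Hv) ltac:(intros z Hz; pose proof (g_ge1 v Hv z Hz); lra) Hgr N).
  assert (SC := sumC X t lambda HX1 HXg ltac:(lra) Hlam N).
  rewrite g_inv in SB by lra. rewrite <- Er in SB.
  fold a in SA. fold b in SB. fold e in SC.
  assert (Kc * v r * sum_f_R0 e N <= Kc * v r * (lambda / (lambda - 1))) by (apply Rmult_le_compat_l; nra).
  assert (A / (A - 1) * v r + Kc * v r * (lambda / (lambda - 1)) + Y * gfun v Y
     <= (Y * gfun v Y + A / (A - 1) + Kc * (lambda / (lambda - 1)) + 1) * v r).
  { assert (Y * gfun v Y * 1 <= Y * gfun v Y * v r) by (apply Rmult_le_compat_l; nra). nra. }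
  lra.
Qed.


Lemma abs_le_sqrt a b : Rabs a <= sqrt (a * a + b * b).
Proof.
  rewrite <- sqrt_Rsqr_abs. apply sqrt_le_1_alt. unfold Rsqr; nra.
Qed.

Theorem corollary5
  (v : R -> R) (Hv : standing_weight v) (Hd : doubling v)
  (Hg : forall q, q > 1 -> exists A, A > 1 /\ exists y0,
          forall y x, y > y0 -> 1 <= y -> x > q * y -> gfun v x > A * gfun v y)
  (n : nat -> nat) (lambda : R) (Hlam : lambda > 1)
  (Hn0 : (1 <= n 0)%nat)
  (Hgap : forall k, INR (n (S k)) >= lambda * INR (n k))
  (ar ai : nat -> R) (C : R)
  (Hcoef : forall k, sqrt (ar k * ar k + ai k * ai k) <= C * gfun v (INR (n k))) :
  exists u : R -> R -> R,
    (forall x y, in_disc x y ->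
       infinite_sum (fun k => re_term (ar k) (ai k) (n k) x y) (u x y)) /\
    in_h_inf_v v u.
Proof.
  destruct (main_est v Hv Hd Hg n lambda Hlam Hn0 Hgap) as [K [HK Hest]].
  assert (HX1 : forall k, 1 <= INR (n k)).
  { induction k. apply (le_INR 1) in Hn0. simpl in Hn0. exact Hn0.
    pose proof (Hgap k). nra. }
  assert (HC : 0 <= C).
  { pose proof (Hcoef 0%nat). pose proof (sqrt_pos (ar 0%nat * ar 0%nat + ai 0%nat * ai 0%nat)).
    pose proof (g_ge1 v Hv _ (HX1 0%nat)). nra. }
  set (b0 := mkcf ar ai n).
  assert (Hw : forall k, wt b0 k <= 2 * C * gfun v (INR (n k))).
  { intros k. unfold wt, b0; simpl. pose proof (Hcoef k).
    pose proof (abs_le_sqrt (ar k) (ai k)). pose proof (abs_le_sqrt (ai k) (ar k)).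
    replace (ai k * ai k + ar k * ar k) with (ar k * ar k + ai k * ai k) in H1 by ring. lra. }
  assert (Hsb : forall s, 0 <= s < 1 -> exists l,
     infinite_sum (fun k => wt b0 k * s ^ ce b0 k) l /\ l <= 2 * C * K * v s).
  { intros s Hs. apply isum_bounded.
    - intros k. apply Rmult_le_pos. apply wt_pos. apply pow_le; lra.
    - intros N. apply Rle_trans with (2 * C * sum_f_R0 (fun k => gfun v (INR (n k)) * s ^ n k) N).
      + rewrite <- sum_f_scal. apply sum_Rle. intros k _. simpl.
        pose proof (Hw k). assert (0 <= s ^ n k) by (apply pow_le; lra). nra.
      + specialize (Hest s Hs N). assert (0 <= 2 * C) by lra.
        replace (2 * C * K * v s) with (2 * C * (K * v s)) by ring.
        apply Rmult_le_compat_l; auto. }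
  assert (Hsumm : summ b0).
  { intros s Hs. destruct (Hsb s Hs) as [l [Hl _]]. eauto. }
  exists (Ser b0). split.
  - intros x y H. exact (Ser_conv b0 x y Hsumm H).
  - split. apply harmonic_of_summ; auto.
    exists (2 * C * K + 1). split. nra.
    intros x y H. destruct (disc_sqrt x y H) as [s [Hs Hxy]].
    set (rho := sqrt (x * x + y * y)).
    assert (Hr : 0 <= rho < 1).
    { unfold in_disc in H. split. apply sqrt_pos.
      apply Rlt_le_trans with (sqrt 1); [apply sqrt_lt_1_alt; split; nra | rewrite sqrt_1; lra]. }
    assert (Hrr : x * x + y * y <= rho * rho) by (unfold rho; rewrite sqrt_sqrt; nra).
    destruct (Hsb rho Hr) as [l [Hl Hlb]].
    assert (Hu : Rabs (Ser b0 x y) <= l).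
    { apply (isum_abs_le _ _ _ _ (Ser_conv_s b0 rho x y Hsumm Hr Hrr) Hl).
      intros k; apply term_bound; lra. }
    assert (1 <= v rho) by (apply (v_ge1 v Hv); lra).
    assert (0 <= C * K) by nra. nra.
Qed.
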